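(* For $\alpha\in\Sigma_0^+$ put $x_\alpha=\tfrac14(m_{\alpha/2}+2)$ and $y_\alpha=\tfrac14(m_{\alpha/2}+2m_\alpha)$. Let $\mu\in\Lambda^+$. Then $\mu_\alpha\in\mathbb Z_{\geq0}$ for all $\alpha\in\Sigma_0^+$, and \[ \mathbf c(\mu+\rho)=\prod_{\alpha\in\Sigma_0^+}\left(\Big(1+\frac{x_\alpha}{\rho_\alpha}\Big)\Big(1+\frac{y_\alpha}{\rho_\alpha}\Big)\right)^{-\mu_\alpha}\cdot\prod_{j=0}^{\mu_\alpha-1}\frac{\big(1+\frac{j}{2\rho_\alpha}\big)\big(1+\frac{\mu_\alpha+j}{2\rho_\alpha}\big)}{\big(1+\frac{j}{x_\alpha+\rho_\alpha}\big)\big(1+\frac{j}{y_\alpha+\rho_\alpha}\big)}, \] where the inner product over $j$ is interpreted as $1$ when $\mu_\alpha=0$.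
   Context: Standing setup. $G$ is a connected compact semisimple Lie group with Lie algebra $\mathfrak g$, $\theta$ an involutive automorphism, $K$ a closed subgroup with $(G^\theta)_0\subseteq K\subseteq G^\theta$, $M=G/K$ simply connected. $\mathfrak g=\mathfrak k\oplus\mathfrak s$ is the eigenspace decomposition of $\theta$, $\mathfrak a\subseteq\mathfrak s$ is maximal abelian, and a $K$-invariant inner product on $\mathfrak s$ induces a real inner product $\langle\cdot,\cdot\rangle$ on $i\mathfrak a^*$. $\Sigma\subset i\mathfrak a^*$ is the set of restricted roots of $(\mathfrak g_{\mathbb C},\mathfrak a_{\mathbb C})$, $m_\alpha=\dim_{\mathbb C}\mathfrak g_{\mathbb C,\alpha}$ the multiplicity (with $m_\beta=0$ if $\beta\notin\Sigma$), $\Sigma^+$ a positive system, $\Sigma_0^+=\{\alpha\in\Sigma^+:2\alpha\notin\Sigma\}$, and $\rho=\tfrac12\sum_{\alpha\in\Sigma^+}m_\alpha\alpha$. For $\lambda\in\mathfrak a_{\mathbb C}^*$ and $\alpha\in\Sigma$, $\lambda_\alpha=\langle\lambda,\alpha\rangle/\langle\alpha,\alpha\rangle$ (so $\rho_\alpha=\langle\rho,\alpha\rangle/\langle\alpha,\alpha\rangle>0$ for $\alpha\in\Sigma^+$). $\Lambda^+=\{\mu\in i\mathfrak a^*:\mu_\alpha\in\mathbb Z_{\ge0}\ \forall\alpha\in\Sigma^+\}$. The Harish-Chandra $c$-function is $\mathbf c(\lambda)={}'c(\lambda)/{}'c(\rho)$ with \[ {}'c(\lambda)=\prod_{\alpha\in\Sigma_0^+}\frac{2^{-2\lambda_\alpha}\,\Gamma(2\lambda_\alpha)}{\Gamma\big(\lambda_\alpha+\tfrac{m_{\alpha/2}}{4}+\tfrac12\big)\,\Gamma\big(\lambda_\alpha+\tfrac{m_{\alpha/2}}{4}+\tfrac{m_\alpha}{2}\big)}.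 \] *)

(* Defs.v *)
From Stdlib Require Import Reals Lra Lia List Arith Factorial Classical ClassicalEpsilon.
Open Scope R_scope.

(* ---------- vectors of i a^* ~ R^r, represented as lists of length r ------ *)
Definition vec := list R.
Definition vzero (r : nat) : vec := repeat 0 r.
Definition vscale (c : R) (v : vec) : vec := map (Rmult c) v.
Definition vadd (u v : vec) : vec := map (fun p => fst p + snd p) (combine u v).
Definition vsub (u v : vec) : vec := map (fun p => fst p - snd p) (combine u v).
Definition ip (u v : vec) : R :=
  fold_right Rplus 0 (map (fun p => fst p * snd p) (combine u v)).

Definition vec_eq_dec : forall u v : vec, {u = v} + {u <> v} :=
  list_eq_dec Req_dec_T.
Definition inb (v : vec) (S : list vec) : bool :=
  if in_dec vec_eq_dec v S then true else false.

Definition lprod {A} (f : A -> R) (l : list A) : R := fold_right Rmult 1 (map f l).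

(* lambda_alpha = <lambda, alpha> / <alpha, alpha> *)
Definition coef (lam a : vec) : R := ip lam a / ip a a.

Definition refl (a b : vec) : vec := vsub b (vscale (2 * coef b a) a).

(* positive system determined by a regular element h *)
Definition posroots (Sigma : list vec) (h : vec) : list vec :=
  filter (fun a => if Rlt_dec 0 (ip a h) then true else false) Sigma.

Definition posroots0 (Sigma : list vec) (h : vec) : list vec :=
  filter (fun a => negb (inb (vscale 2 a) Sigma)) (posroots Sigma h).

Definition rho (r : nat) (Sigma : list vec) (h : vec) (m : vec -> nat) : vec :=
  vscale (1/2) (fold_right vadd (vzero r)
     (map (fun a => vscale (INR (m a)) a) (posroots Sigma h))).

(* Root-system / multiplicity axioms for the restricted root data of the
   compact symmetric space (finite, reduced or not, spanning, with a
   Weyl-invariant positive multiplicity function, m_beta = 0 off Sigma). *)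
Definition restricted_root_data (r : nat) (Sigma : list vec) (h : vec)
    (m : vec -> nat) : Prop :=
  NoDup Sigma /\
  (forall a, In a Sigma -> length a = r /\ a <> vzero r) /\
  (forall v, length v = r -> (forall a, In a Sigma -> ip v a = 0) -> v = vzero r) /\
  (forall a b, In a Sigma -> In b Sigma -> In (refl a b) Sigma) /\
  (forall a b, In a Sigma -> In b Sigma -> exists z : Z, 2 * coef b a = IZR z) /\
  length h = r /\ (forall a, In a Sigma -> ip a h <> 0) /\
  (forall b, (m b > 0)%nat <-> In b Sigma) /\
  (forall a b, In a Sigma -> In b Sigma -> m (refl a b) = m b).

(* Gamma(x) = lim_n n! n^x / (x (x+1) ... (x+n)),  valid for x > 0. *)
Definition gauss_seq (x : R) (n : nat) : R :=
  INR (Factorial.fact n) * Rpower (INR n) x / lprod (fun k => x + INR k) (seq 0 (S n)).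

Definition Gamma (x : R) : R :=
  match excluded_middle_informative (exists l, Un_cv (gauss_seq x) l) with
  | left H => proj1_sig (constructive_indefinite_description _ H)
  | right _ => 0
  end.

Definition cprime (Sigma : list vec) (h : vec) (m : vec -> nat) (lam : vec) : R :=
  lprod (fun a =>
     let la := coef lam a in
     let mh := INR (m (vscale (1/2) a)) in
     Rpower 2 (- 2 * la) * Gamma (2 * la) /
       (Gamma (la + mh / 4 + 1/2) * Gamma (la + mh / 4 + INR (m a) / 2)))
   (posroots0 Sigma h).

Definition cfun (r : nat) (Sigma : list vec) (h : vec) (m : vec -> nat) (lam : vec) : R :=
  cprime Sigma h m lam / cprime Sigma h m (rho r Sigma h m).

Definition Lambda_plus (r : nat) (Sigma : list vec) (h : vec) (mu : vec) : Prop :=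
  length mu = r /\
  forall a, In a (posroots Sigma h) -> exists n : nat, coef mu a = INR n.

(* Main.v *)
Require Import Defs.
From Stdlib Require Import Reals List Lra Lia ClassicalEpsilon.
Open Scope R_scope.

Lemma exp_le' x y : x <= y -> exp x <= exp y.
Proof. intros [H|H]; [left; apply exp_increasing; auto| subst; lra]. Qed.
Lemma ln_le' x y : 0 < x -> x <= y -> ln x <= ln y.
Proof. intros Hx [H|H]; [left; apply ln_increasing; auto| subst; lra]. Qed.
Lemma ln_sub1 y : 0 < y -> ln y <= y - 1.
Proof.
  intros Hy. rewrite <- (ln_exp (y-1)). apply ln_le'; auto.
  pose proof (exp_ineq1_le (y-1)). lra.
Qed.

Lemma lprod_cons {A} (f:A->R) a l : lprod f (a::l) = f a * lprod f l.
Proof. reflexivity. Qed.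
Lemma lprod_nil {A} (f:A->R) : lprod f nil = 1.
Proof. reflexivity. Qed.
Lemma lprod_app {A} (f:A->R) l1 l2 : lprod f (l1++l2) = lprod f l1 * lprod f l2.
Proof. induction l1; simpl app; rewrite ?lprod_cons, ?lprod_nil; [ring| rewrite IHl1; ring]. Qed.
Lemma lprod_ext_in {A} (f g:A->R) l : (forall a, In a l -> f a = g a) -> lprod f l = lprod g l.
Proof. induction l; intros H; rewrite ?lprod_cons, ?lprod_nil; auto.
  rewrite H, IHl; simpl; auto. intros; apply H; simpl; auto. Qed.
Lemma lprod_mult {A} (f g:A->R) l : lprod (fun a => f a * g a) l = lprod f l * lprod g l.
Proof. induction l; rewrite ?lprod_cons, ?lprod_nil; [ring| rewrite IHl; ring]. Qed.
Lemma lprod_inv {A} (f:A->R) l : lprod (fun a => / f a) l = / lprod f l.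
Proof. induction l; rewrite ?lprod_cons, ?lprod_nil; [field| rewrite IHl, Rinv_mult; ring]. Qed.
Lemma lprod_const {A} (c:R) (l:list A) : lprod (fun _ => c) l = c ^ length l.
Proof. induction l; rewrite ?lprod_cons, ?lprod_nil; simpl; [ring| rewrite IHl; ring]. Qed.
Lemma lprod_neq0 {A} (f:A->R) l : (forall a, In a l -> f a <> 0) -> lprod f l <> 0.
Proof. induction l; intros H; rewrite ?lprod_cons, ?lprod_nil; [lra|].
  apply Rmult_integral_contrapositive_currified; [apply H; simpl; auto| apply IHl; intros; apply H; simpl; auto]. Qed.
Lemma lprod_div {A} (f g:A->R) l : (forall a, In a l -> g a <> 0) ->
  lprod f l / lprod g l = lprod (fun a => f a / g a) l.
Proof. induction l; intros H; rewrite ?lprod_cons, ?lprod_nil; [field|].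
  rewrite <- IHl by (intros; apply H; simpl; auto).
  field. split; [apply lprod_neq0; intros; apply H; simpl; auto| apply H; simpl; auto]. Qed.

Definition Q (z : R) (n : nat) : R := lprod (fun k => z + INR k) (seq 0 n).
Lemma Q_S z n : Q z (S n) = Q z n * (z + INR n).
Proof. unfold Q. rewrite seq_S, lprod_app, lprod_cons, lprod_nil. simpl (0+n)%nat. ring. Qed.
Lemma Q_pos z n : 0 < z -> 0 < Q z n.
Proof. intros Hz. induction n. unfold Q, lprod; simpl; lra.
  rewrite Q_S. apply Rmult_lt_0_compat; auto. pose proof (pos_INR n); lra. Qed.
Lemma Q_add z n m : Q z (n + m) = Q z n * Q (z + INR n) m.
Proof. induction m. rewrite Nat.add_0_r; unfold Q at 3; simpl seq; rewrite lprod_nil; ring.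
  rewrite Nat.add_succ_r, !Q_S, IHm, plus_INR; ring. Qed.
Lemma Q_shift x m : x * Q (x+1) m = Q x (S m).
Proof. induction m. unfold Q, lprod; simpl; ring.
  rewrite Q_S, (Q_S x (S m)), <- IHm, S_INR; ring. Qed.

Lemma Gamma_spec x l : Un_cv (gauss_seq x) l -> Gamma x = l.
Proof.
  intros H. unfold Gamma. destruct (excluded_middle_informative _) as [e|n].
  - destruct (constructive_indefinite_description _ _) as [l' Hl']. simpl.
    eapply UL_sequence; eauto.
  - exfalso; apply n; eauto.
Qed.

Lemma gauss_eq x n : gauss_seq x n = INR (Factorial.fact n) * Rpower (INR n) x / Q x (S n).
Proof. reflexivity. Qed.

Lemma Rpower_pos a b : 0 < Rpower a b.
Proof. unfold Rpower. apply exp_pos. Qed.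

Lemma ln_q_lower p : 0 < p -> / (p+1) <= ln ((p+1)/p).
Proof.
  intros Hp. assert (Hq : 0 < (p+1)/p) by (apply Rdiv_lt_0_compat; lra).
  assert (E : ln ((p+1)/p) = - ln (/ ((p+1)/p))) by (rewrite ln_Rinv; lra).
  rewrite E. pose proof (ln_sub1 (/ ((p+1)/p)) (Rinv_0_lt_compat _ Hq)).
  assert (E2 : / ((p+1)/p) - 1 = - / (p+1)) by (field; lra). lra.
Qed.

Lemma ratio_ge1 p x : 0 < p -> 0 < x -> 1 <= Rpower ((p+1)/p) x * (p+1) / (x + (p+1)).
Proof.
  intros Hp Hx.
  assert (HE : 1 + x / (p+1) <= Rpower ((p+1)/p) x).
  { unfold Rpower. eapply Rle_trans; [|apply exp_le'].
    - apply exp_ineq1_le.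
    - pose proof (ln_q_lower p Hp).
      replace (x / (p+1)) with (x * / (p+1)) by reflexivity.
      apply Rmult_le_compat_l; lra. }
  apply Rle_trans with ((1 + x/(p+1)) * (p+1) / (x+(p+1))); [right; field; lra|].
  unfold Rdiv. apply Rmult_le_compat_r; [left; apply Rinv_0_lt_compat; lra|].
  apply Rmult_le_compat_r; lra.
Qed.

Lemma ratio_le p x : 0 < p -> 0 < x ->
  Rpower ((p+1)/p) x * (p+1) / (x + (p+1)) <= exp (x*(x+1)*(/p - /(p+1))).
Proof.
  intros Hp Hx.
  assert (Hq : 0 < (p+1)/p) by (apply Rdiv_lt_0_compat; lra).
  assert (Hr : 0 < (p+1)/(x+(p+1))) by (apply Rdiv_lt_0_compat; lra).
  assert (H1 : Rpower ((p+1)/p) x <= exp (x * ((p+1)/p - 1))).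
  { unfold Rpower. apply exp_le'.
    apply Rmult_le_compat_l; [lra|]. apply ln_sub1; auto. }
  assert (H2 : (p+1)/(x+(p+1)) <= exp ((p+1)/(x+(p+1)) - 1)).
  { rewrite <- (exp_ln _ Hr) at 1. apply exp_le'. apply ln_sub1; auto. }
  assert (H3 : x * ((p+1)/p - 1) + ((p+1)/(x+(p+1)) - 1) =
     x*(x+1)*(/p - /(p+1)) - x*(x+1)*x / (p*(p+1)*(x+(p+1)))) by (field; lra).
  assert (H4 : 0 <= x*(x+1)*x / (p*(p+1)*(x+(p+1)))).
  { left. apply Rdiv_lt_0_compat. apply Rmult_lt_0_compat; [apply Rmult_lt_0_compat|]; lra.
    apply Rmult_lt_0_compat; [apply Rmult_lt_0_compat|]; lra. }
  apply Rle_trans with (exp (x * ((p+1)/p - 1)) * exp ((p+1)/(x+(p+1)) - 1)).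
  - unfold Rdiv at 1. rewrite Rmult_assoc. fold ((p+1)/(x+(p+1))).
    apply Rmult_le_compat; auto; [left; apply Rpower_pos| lra].
  - rewrite <- exp_plus. apply exp_le'. lra.
Qed.

Lemma gauss_step x n : 0 < x ->
  gauss_seq x (S (S n)) = gauss_seq x (S n) *
    (Rpower ((INR (S n) + 1)/INR (S n)) x * (INR (S n) + 1) / (x + (INR (S n) + 1))).
Proof.
  intros Hx. rewrite !gauss_eq. set (p := INR (S n)).
  assert (Hp : 0 < p) by (apply lt_0_INR; lia).
  assert (E : INR (S (S n)) = p + 1) by (unfold p; apply S_INR).
  rewrite (Q_S x (S (S n))), E.
  assert (F : INR (Factorial.fact (S (S n))) = (p+1) * INR (Factorial.fact (S n))).
  { change (Factorial.fact (S (S n))) with (S (S n) * Factorial.fact (S n))%nat.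
    rewrite mult_INR, E. reflexivity. }
  rewrite F.
  assert (Hr : Rpower (p+1) x = Rpower p x * Rpower ((p+1)/p) x).
  { rewrite Rpower_mult_distr; auto. f_equal. field. lra. apply Rdiv_lt_0_compat; lra. }
  rewrite Hr.
  assert (HQ : 0 < Q x (S (S n))) by (apply Q_pos; auto).
  field. repeat split; lra.
Qed.

Lemma a_pos x n : 0 < x -> 0 < gauss_seq x n.
Proof.
  intros Hx. rewrite gauss_eq. apply Rdiv_lt_0_compat; [|apply Q_pos; auto].
  apply Rmult_lt_0_compat; [apply lt_0_INR, Factorial.lt_O_fact| apply Rpower_pos].
Qed.

Lemma a_bound x n : 0 < x ->
  gauss_seq x (S n) <= gauss_seq x 1 * exp (x*(x+1)*(1 - / INR (S n))).
Proof.
  intros Hx. induction n.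
  - replace (1 - / INR 1) with 0 by (simpl; field). rewrite Rmult_0_r, exp_0. lra.
  - rewrite gauss_step by auto. set (p := INR (S n)) in *.
    assert (Hp : 0 < p) by (apply lt_0_INR; lia).
    rewrite S_INR. fold p.
    replace (x*(x+1)*(1 - /(p+1))) with (x*(x+1)*(1 - /p) + x*(x+1)*(/p - /(p+1))) by (field; lra).
    rewrite exp_plus, <- Rmult_assoc.
    apply Rmult_le_compat; auto.
    + left; apply a_pos; auto.
    + apply Rle_trans with 1; [lra| apply ratio_ge1; auto].
    + apply ratio_le; auto.
Qed.

Lemma gauss_conv x : 0 < x -> exists l, 0 < l /\ Un_cv (gauss_seq x) l.
Proof.
  intros Hx. set (a := fun n => gauss_seq x (S n)).
  assert (Hg : Un_growing a).
  { intro n. unfold a. rewrite gauss_step by auto.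
    pose proof (a_pos x (S n) Hx). pose proof (ratio_ge1 (INR (S n)) x ltac:(apply lt_0_INR; lia) Hx).
    rewrite <- (Rmult_1_r (gauss_seq x (S n))) at 1. apply Rmult_le_compat_l; lra. }
  assert (Hb : has_ub a).
  { exists (gauss_seq x 1 * exp (x*(x+1))). intros y [i ->]. unfold a.
    eapply Rle_trans; [apply a_bound; auto|]. apply Rmult_le_compat_l; [left; apply a_pos; auto|].
    apply exp_le'. assert (0 < / INR (S i)) by (apply Rinv_0_lt_compat, lt_0_INR; lia).
    assert (0 < x*(x+1)) by (apply Rmult_lt_0_compat; lra). nra. }
  destruct (growing_cv a Hg Hb) as [l Hl].
  exists l. split.
  - pose proof (growing_ineq a l Hg Hl 0). pose proof (a_pos x 1 Hx). unfold a in *. lra.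
  - intros eps He. destruct (Hl eps He) as [N HN]. exists (S N). intros n Hn.
    destruct n; [lia|]. apply (HN n). lia.
Qed.

Lemma Gamma_pos x : 0 < x -> 0 < Gamma x.
Proof. intros Hx. destruct (gauss_conv x Hx) as [l [Hl Hc]]. rewrite (Gamma_spec x l Hc). auto. Qed.

Lemma gauss_rec x n : 0 < x ->
  gauss_seq (x+1) (S n) = gauss_seq x (S n) * (x * INR (S n) / (x + INR (S (S n)))).
Proof.
  intros Hx. rewrite !gauss_eq.
  assert (HQ : Q (x+1) (S (S n)) = Q x (S (S (S n))) / x).
  { rewrite <- (Q_shift x (S (S n))). field. lra. }
  rewrite HQ, (Q_S x (S (S n))).
  assert (Hp : 0 < INR (S n)) by (apply lt_0_INR; lia).
  rewrite Rpower_plus, Rpower_1 by auto.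
  assert (0 < Q x (S (S n))) by (apply Q_pos; auto).
  assert (0 < INR (S (S n))) by (apply lt_0_INR; lia).
  field. repeat split; lra.
Qed.

Lemma factor_cv x : 0 < x -> Un_cv (fun n => x * INR (S n) / (x + INR (S (S n)))) x.
Proof.
  intros Hx eps He.
  destruct (INR_unbounded (x*(x+1)/eps)) as [N HN]. exists N. intros n Hn.
  unfold Rdist. set (p := INR (S n)). assert (E : INR (S (S n)) = p + 1) by apply S_INR.
  rewrite E.
  assert (Hp : INR N <= p) by (unfold p; apply le_INR; lia).
  assert (Hp0 : 0 < p) by (apply lt_0_INR; lia).
  replace (x * p / (x + (p+1)) - x) with (- (x*(x+1)/(x+(p+1)))) by (field; lra).
  rewrite Rabs_Ropp, Rabs_pos_eq.
  2: { left; apply Rdiv_lt_0_compat; [apply Rmult_lt_0_compat|]; lra. }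
  apply Rlt_le_trans with (x*(x+1)/ (x*(x+1)/eps)).
  - unfold Rdiv. apply Rmult_lt_compat_l; [apply Rmult_lt_0_compat; lra|].
    apply Rinv_lt_contravar. apply Rmult_lt_0_compat; [|lra].
    apply Rdiv_lt_0_compat; [apply Rmult_lt_0_compat|]; lra. lra.
  - right. field. split; lra.
Qed.

Lemma Gamma_succ x : 0 < x -> Gamma (x+1) = x * Gamma x.
Proof.
  intros Hx. destruct (gauss_conv x Hx) as [l [Hl Hc]]. rewrite (Gamma_spec x l Hc).
  apply Gamma_spec.
  assert (Hs : Un_cv (fun n => gauss_seq x (S n)) l).
  { intros eps He. destruct (Hc eps He) as [N HN]. exists N. intros; apply HN; lia. }
  pose proof (CV_mult _ _ _ _ Hs (factor_cv x Hx)) as Hm.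
  intros eps He. destruct (Hm eps He) as [N HN]. exists (S N). intros n Hn.
  destruct n; [lia|]. rewrite gauss_rec by auto. rewrite (Rmult_comm x l). apply HN; lia.
Qed.

Lemma Gamma_Q z n : 0 < z -> Gamma (z + INR n) = Gamma z * Q z n.
Proof.
  intros Hz. induction n.
  - simpl. rewrite Rplus_0_r. unfold Q, lprod. simpl. ring.
  - rewrite S_INR, <- Rplus_assoc, Gamma_succ, IHn, Q_S. ring.
    pose proof (pos_INR n); lra.
Qed.

Lemma term_id c K mh ma : 0 < c -> 0 <= mh -> 0 <= ma ->
 (Rpower 2 (-2*(INR K + c)) * Gamma (2*(INR K+c)) /
    (Gamma ((INR K + c) + mh/4 + 1/2) * Gamma ((INR K+c) + mh/4 + ma/2))) /
 (Rpower 2 (-2*c) * Gamma (2*c) / (Gamma (c + mh/4 + 1/2) * Gamma (c + mh/4 + ma/2)))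
 = / ((((1 + ((mh+2)/4)/c) * (1 + ((mh+2*ma)/4)/c)) ^ K)) *
   lprod (fun j => ((1 + INR j/(2*c)) * (1 + (INR K + INR j)/(2*c))) /
       ((1 + INR j/((mh+2)/4 + c)) * (1 + INR j/((mh+2*ma)/4 + c)))) (seq 0 K).
Proof.
  intros Hc Hmh Hma.
  set (A := c + mh/4 + 1/2). set (B := c + mh/4 + ma/2).
  assert (HA : 0 < A) by (unfold A; lra). assert (HB : 0 < B) by (unfold B; lra).
  assert (G1 : Gamma (2*(INR K+c)) = Gamma (2*c) * (Q (2*c) K * Q (2*c + INR K) K)).
  { replace (2*(INR K+c)) with (2*c + INR (K+K)) by (rewrite plus_INR; ring).
    rewrite Gamma_Q, Q_add by lra. reflexivity. }
  assert (G2 : Gamma ((INR K + c) + mh/4 + 1/2) = Gamma A * Q A K).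
  { rewrite <- Gamma_Q by lra. f_equal. unfold A; ring. }
  assert (G3 : Gamma ((INR K + c) + mh/4 + ma/2) = Gamma B * Q B K).
  { rewrite <- Gamma_Q by lra. f_equal. unfold B; ring. }
  assert (R1 : Rpower 2 (-2*(INR K + c)) = Rpower 2 (-2*c) * / (2^K * 2^K)).
  { replace (-2*(INR K + c)) with (-2*c + - INR (K+K)) by (rewrite plus_INR; ring).
    rewrite Rpower_plus, Rpower_Ropp, Rpower_pow, pow_add by lra. reflexivity. }
  rewrite G1, G2, G3, R1.
  rewrite (lprod_ext_in _ (fun j => (2*c + INR j) * (2*c + INR K + INR j) * / (A + INR j)
       * / (B + INR j) * (A*B*/(4*c*c)))).
  2: { intros j _. pose proof (pos_INR j). unfold A, B. field. repeat split; lra. }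
  rewrite !lprod_mult, !lprod_inv, lprod_const, length_seq.
  change (lprod (fun j => 2*c + INR j) (seq 0 K)) with (Q (2*c) K).
  change (lprod (fun j => 2*c + INR K + INR j) (seq 0 K)) with (Q (2*c + INR K) K).
  change (lprod (fun j => A + INR j) (seq 0 K)) with (Q A K).
  change (lprod (fun j => B + INR j) (seq 0 K)) with (Q B K).
  replace ((1 + ((mh+2)/4)/c) * (1 + ((mh+2*ma)/4)/c)) with (A*B/(c*c)) by (unfold A, B; field; lra).
  rewrite !lprod_const, !length_seq.
  replace ((A*B/(c*c))^K) with (A^K * B^K * (/c)^K * (/c)^K)
    by (rewrite <- !Rpow_mult_distr; f_equal; field; lra).
  replace ((4*c*c)^K) with (2^K*2^K*c^K*c^K) by (rewrite <- !Rpow_mult_distr; f_equal; ring).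
  rewrite !pow_inv.
  assert (P11 : c^K <> 0) by (apply pow_nonzero; lra).
  assert (P12 : A^K <> 0) by (apply pow_nonzero; lra).
  assert (P13 : B^K <> 0) by (apply pow_nonzero; lra).
  assert (P1 : 0 < Q (2*c) K) by (apply Q_pos; lra).
  assert (P2 : 0 < Q (2*c + INR K) K) by (pose proof (pos_INR K); apply Q_pos; lra).
  assert (P3 : 0 < Q A K) by (apply Q_pos; lra).
  assert (P4 : 0 < Q B K) by (apply Q_pos; lra).
  assert (P5 : 0 < Gamma (2*c)) by (apply Gamma_pos; lra).
  assert (P6 : 0 < Gamma A) by (apply Gamma_pos; lra).
  assert (P7 : 0 < Gamma B) by (apply Gamma_pos; lra).
  assert (P8 : 0 < Rpower 2 (-2*c)) by apply Rpower_pos.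
  assert (P10 : 2^K <> 0) by (apply pow_nonzero; lra).
  field. repeat split; lra.
Qed.

Lemma ip_vadd u v w : length u = length v -> ip (vadd u v) w = ip u w + ip v w.
Proof.
  revert v w. induction u as [|x u IH]; intros [|y v] w H; simpl in H; try discriminate.
  - unfold ip, vadd; simpl; ring.
  - destruct w as [|z w]. unfold ip, vadd; simpl; ring.
    injection H as H. unfold ip, vadd in *. simpl. rewrite IH by auto. ring.
Qed.

Lemma coef_vadd u v a : length u = length v -> coef (vadd u v) a = coef u a + coef v a.
Proof. intros H. unfold coef. rewrite ip_vadd by auto. unfold Rdiv. ring. Qed.

Lemma length_vadd u v : length (vadd u v) = Nat.min (length u) (length v).
Proof. unfold vadd. rewrite length_map, length_combine. reflexivity. Qed.

Lemma length_fold r (g : vec -> vec) l : (forall a, In a l -> length (g a) = r) ->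
  length (fold_right vadd (vzero r) (map g l)) = r.
Proof.
  induction l; intros H; simpl.
  - unfold vzero; apply repeat_length.
  - rewrite length_vadd, H, IHl. apply Nat.min_id. intros; apply H; simpl; auto. simpl; auto.
Qed.

Lemma length_rho r Sigma h m : restricted_root_data r Sigma h m -> length (rho r Sigma h m) = r.
Proof.
  intros Hd. destruct Hd as [_ [Hl _]]. unfold rho, vscale. rewrite length_map.
  apply length_fold. intros a Ha. rewrite length_map.
  unfold posroots in Ha. apply filter_In in Ha. apply (Hl a). tauto.
Qed.

Theorem theorem3p5 (r : nat) (Sigma : list vec) (h : vec) (m : vec -> nat)
  (Hdata : restricted_root_data r Sigma h m)
  (Hrho : forall a, In a (posroots Sigma h) -> 0 < coef (rho r Sigma h m) a)
  (mu : vec) (Hmu : Lambda_plus r Sigma h mu) :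
  (forall a, In a (posroots0 Sigma h) -> exists n : nat, coef mu a = INR n) /\
  (forall k : vec -> nat,
     (forall a, In a (posroots0 Sigma h) -> coef mu a = INR (k a)) ->
     cfun r Sigma h m (vadd mu (rho r Sigma h m)) =
     lprod (fun a =>
        let ra := coef (rho r Sigma h m) a in
        let xa := (INR (m (vscale (1/2) a)) + 2) / 4 in
        let ya := (INR (m (vscale (1/2) a)) + 2 * INR (m a)) / 4 in
        / (((1 + xa / ra) * (1 + ya / ra)) ^ (k a)) *
        lprod (fun j =>
           ((1 + INR j / (2 * ra)) * (1 + (INR (k a) + INR j) / (2 * ra))) /
           ((1 + INR j / (xa + ra)) * (1 + INR j / (ya + ra))))
          (seq 0 (k a)))
       (posroots0 Sigma h)).
Proof.
  destruct Hmu as [Hlen Hmu].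
  assert (Hsub : forall a, In a (posroots0 Sigma h) -> In a (posroots Sigma h)).
  { intros a Ha. unfold posroots0 in Ha. apply filter_In in Ha. tauto. }
  split.
  - intros a Ha. apply Hmu, Hsub, Ha.
  - intros k Hk. unfold cfun, cprime.
    rewrite lprod_div.
    2: { intros a Ha. cbv zeta. pose proof (Hrho a (Hsub a Ha)) as Hc.
         set (c := coef (rho r Sigma h m) a) in *.
         set (mh := INR (m (vscale (1/2) a))). set (ma := INR (m a)).
         assert (0 <= mh) by apply pos_INR. assert (0 <= ma) by apply pos_INR.
         pose proof (Rpower_pos 2 (-2*c)).
         pose proof (Gamma_pos (2*c) ltac:(lra)).
         pose proof (Gamma_pos (c + mh/4 + 1/2) ltac:(lra)).
         pose proof (Gamma_pos (c + mh/4 + ma/2) ltac:(lra)).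
         apply Rgt_not_eq, Rdiv_lt_0_compat; [apply Rmult_lt_0_compat|]; nra. }
    apply lprod_ext_in. intros a Ha. cbv zeta.
    pose proof (Hrho a (Hsub a Ha)) as Hc.
    rewrite coef_vadd by (rewrite Hlen, length_rho; auto).
    rewrite (Hk a Ha).
    apply term_id; auto; apply pos_INR.
Qed.
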